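(* Let $\mathbb{M}_1=(X,\mathcal{I}_1)$, $\mathbb{M}_2=(X,\mathcal{I}_2)$ be matroids on a finite set $X$, let $B$ be a common basis, let $\delta\ge0$, and let $A_1,A_2$ be the arc sets of the exchange graph of $B$ (see context). For a weight function $w':X\to\mathbb{R}_{\ge0}$, define arc lengths $l_{xy}=w'(x)$ for $(x,y)\in A_1$ and $l_{yx}=-w'(y)$ for $(y,x)\in A_2$. Then $B$ is $\delta$-optimal under $w'$ (i.e. $w'(B)\ge w'(B')+\delta$ for every common basis $B'\ne B$) if and only if there exist real numbers $d_{xy}$, $x,y\in X$, such that $d_{xy}\le l_{xy}$ for all $(x,y)\in A_1\cup A_2$, $d_{xz}\le d_{xy}+l_{yz}$ for all $x,z\in X$ and all $(y,z)\in A_1\cup A_2$, and $d_{xx}\ge\delta$ for all $x\in X$. Consequently, the problem of finding $w'$ minimizing $\sum_{e\in X}(w'(e)-w(e))^2$ such that $B$ is $\delta$-optimal under $w'$ is equivalent to a quadratic program with linear constraints in the variables $w'$, $l$, $d$.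
   Context: $w'(S)=\sum_{x\in S}w'(x)$. The exchange graph of $B$ has vertex set $X$ and arcs $A_1=\{(x,y): x\in B,\ y\in X\setminus B,\ B-\{x\}+\{y\}\in\mathcal{I}_1\}$ and $A_2=\{(y,x): x\in B,\ y\in X\setminus B,\ B-\{x\}+\{y\}\in\mathcal{I}_2\}$. *)

(* Defs.v *)
From HB Require Import structures.
From mathcomp Require Import all_boot all_order all_algebra.
Set Implicit Arguments. Unset Strict Implicit. Unset Printing Implicit Defensive.
Import Order.TTheory GRing.Theory Num.Theory.
Local Open Scope ring_scope.

Definition is_matroid (T : finType) (I : pred {set T}) : Prop :=
  [/\ I set0,
      (forall A B : {set T}, B \subset A -> I A -> I B) &
      (forall A B : {set T}, I A -> I B -> #|A| < #|B| ->
         exists2 x, x \in B :\: A & I (x |: A))]%N.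

Definition is_basis (T : finType) (I : pred {set T}) (B : {set T}) : bool :=
  maxset I B.

Definition common_basis (T : finType) (I1 I2 : pred {set T}) (B : {set T}) : bool :=
  is_basis I1 B && is_basis I2 B.

Definition arcA1 (T : finType) (I1 : pred {set T}) (B : {set T}) (x y : T) : bool :=
  [&& x \in B, y \notin B & I1 (y |: (B :\ x))].
Definition arcA2 (T : finType) (I2 : pred {set T}) (B : {set T}) (y x : T) : bool :=
  [&& x \in B, y \notin B & I2 (y |: (B :\ x))].

Definition is_arc (T : finType) (I1 I2 : pred {set T}) (B : {set T}) (a b : T) : bool :=
  arcA1 I1 B a b || arcA2 I2 B a b.

Definition wset (R : numDomainType) (T : finType) (w : T -> R) (S : {set T}) : R :=
  \sum_(x in S) w x.

(* arc length: l_xy = w'(x) on A1, l_yx = -w'(y) on A2 (the two arc sets are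
   disjoint); value off the arcs is irrelevant. *)
Definition arc_len (R : numDomainType) (T : finType) (I1 I2 : pred {set T})
  (B : {set T}) (w : T -> R) (a b : T) : R :=
  if arcA1 I1 B a b then w a else if arcA2 I2 B a b then - w a else 0.

Definition delta_optimal (R : numDomainType) (T : finType) (I1 I2 : pred {set T})
  (B : {set T}) (delta : R) (w : T -> R) : Prop :=
  forall B' : {set T}, common_basis I1 I2 B' -> B' != B ->
    wset w B' + delta <= wset w B.

(* Main.v *)
Require Import Defs.
From HB Require Import structures.
From mathcomp Require Import all_boot all_order all_algebra.
From mathcomp Require Import lra zify.
From Stdlib Require Import Classical.
Import Order.TTheory GRing.Theory Num.Theory.
Set Implicit Arguments. Unset Strict Implicit. Unset Printing Implicit Defensive.

Section Mat.
Variable T : finType.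
Variable I : pred {set T}.
Hypothesis HI : is_matroid I.

Lemma msub (A B : {set T}) : B \subset A -> I A -> I B.
Proof. by case: HI => _ H _; apply: H. Qed.

Lemma maug (A B : {set T}) : I A -> I B -> #|A| < #|B| -> exists2 x, x \in B :\: A & I (x |: A).
Proof. by case: HI => _ _ H; apply: H. Qed.

Lemma basis_card (B B' : {set T}) : maxset I B -> maxset I B' -> #|B| = #|B'|.
Proof.
have H : forall B B' : {set T}, maxset I B -> maxset I B' -> #|B'| <= #|B|.
  move=> X Y /maxsetP [IX MX] /maxsetP [IY _]; rewrite leqNgt; apply/negP => lt.
  have [x] := maug IX IY lt; rewrite inE => /andP [xX _] Ix.
  have := MX _ Ix (subsetUr _ _) => E.
  by move: xX; rewrite -E setU11.
by move=> HB HB'; apply/eqP; rewrite eqn_leq !H.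
Qed.

Lemma card_basis (B S : {set T}) : maxset I B -> I S -> #|S| = #|B| -> maxset I S.
Proof.
move=> HB IS cS; apply/maxsetP; split => // S' IS' sub.
apply/eqP; rewrite eq_sym eqEcard sub /= leqNgt; apply/negP => lt.
case/maxsetP: HB => IB MB.
have lt' : #|B| < #|S'| by rewrite -cS.
have [x] := maug IB IS' lt'.
rewrite inE => /andP [xB _] Ix.
have := MB _ Ix (subsetUr _ _) => E.
by move: xB; rewrite -E setU11.
Qed.

Lemma extend k (A C : {set T}) : #|C| - #|A| = k -> I A -> I C -> #|A| <= #|C| ->
  exists A' : {set T}, [/\ A \subset A', A' \subset A :|: C, I A' & #|A'| = #|C|].
Proof.
elim: k A => [|k IH] A ek IA IC le.
  exists A; split => //; first exact: subsetUl.
  by apply/eqP; rewrite eqn_leq le /= -subn_eq0 ek.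
have lt : #|A| < #|C| by rewrite -subn_gt0 ek.
have [x] := maug IA IC lt; rewrite inE => /andP [xA xC] Ix.
have cx : #|x |: A| = #|A|.+1 by rewrite cardsU1 xA.
have [||A' [s1 s2 I' c']] := IH (x |: A) _ Ix IC.
- by rewrite cx subnS ek.
- by rewrite cx.
exists A'; split => //.
- exact: subset_trans (subsetUr _ _) s1.
- apply: (subset_trans s2); apply/subsetP => z; rewrite !inE.
  by case/orP=> [/orP [/eqP -> | ->] | ->]; rewrite ?xC ?orbT.
Qed.

Lemma exch (B1 B2 : {set T}) x : maxset I B1 -> maxset I B2 -> x \in B1 :\: B2 ->
  exists2 y, y \in B2 :\: B1 & I (x |: (B2 :\ y)).
Proof.
move=> H1 H2; rewrite inE => /andP [xB2 xB1].
have e12 := basis_card H1 H2.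
case/maxsetP: (H1) => I1 _; case/maxsetP: (H2) => I2 _.
set A := x |: (B1 :&: B2).
have sA : A \subset B1.
  by apply/subsetP => z; rewrite !inE => /orP [/eqP -> | /andP []].
have IA : I A := msub sA I1.
have leA : #|A| <= #|B2| by rewrite -e12 subset_leq_card.
have [A' [s1 s2 IA' cA']] := extend erefl IA I2 leA.
have s3 : A' \subset x |: B2.
  apply: (subset_trans s2); apply/subsetP => z; rewrite !inE.
  by case/orP => [/orP [-> | /andP [_ ->]] | ->]; rewrite ?orbT.
have cD : #|(x |: B2) :\: A'| = 1.
  by rewrite cardsDS // cardsU1 xB2 cA' add1n subSnn.
have := cD; move/eqP/cards1P => [y Ey].

have yD : y \in (x |: B2) :\: A' by rewrite Ey set11.
move: (yD); rewrite !inE => /andP [yA' yxB].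
have xA' : x \in A' by apply: (subsetP s1); rewrite setU11.
have yx : y != x by apply/eqP => e; move: yA'; rewrite e xA'.
have yB2 : y \in B2 by move: yxB; rewrite (negbTE yx).
have yB1 : y \notin B1.
  apply/negP => yB1; move: yA'; rewrite (subsetP s1) //.
  by rewrite !inE yB1 yB2 orbT.
exists y; first by rewrite inE yB1.
suff -> : x |: (B2 :\ y) = A' by [].
apply/setP => z; rewrite !inE.
case: (boolP (z \in A')) => zA'.
- have := subsetP s3 _ zA'; rewrite !inE => /orP [/eqP -> | zB2]; first by rewrite eqxx.
  have : z \notin (x |: B2) :\: A' by rewrite !inE zA'.
  rewrite Ey inE => ->; by rewrite zB2 orbT.
- have : z \in (x |: B2) :\: A' = (z \in x |: B2) by rewrite !inE zA'.
  rewrite Ey !inE => E.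
  case: (eqVneq z y) => [-> | zy] /=; first by rewrite (negbTE yx).
  by rewrite -E (negbTE zy).
Qed.


Lemma cardD1in (A : {set T}) a : a \in A -> #|A :\ a| = #|A|.-1.
Proof. by move=> aA; rewrite (cardsD1 a A) aA. Qed.

Section Transfer.
Variables (B : {set T}) (x1 x y1 yj : T).
Hypotheses (IB : I B) (x1B : x1 \in B) (xB : x \in B) (xx1 : x != x1)
  (y1B : y1 \notin B) (yjB : yj \notin B) (y1j : y1 != yj)
  (I1 : I (y1 |: (B :\ x1))) (N1 : ~~ I (yj |: (B :\ x1))).

Let E := yj |: ((B :\ x1) :\ x).

Let cE : #|E| = #|B|.-1.-1.+1.
Proof.
rewrite /E cardsU1 !inE (negbTE yjB) !andbF add1n.
by rewrite cardD1in ?cardD1in // !inE xx1.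
Qed.

Let cB0 : 0 < #|B|.-1.
Proof. by rewrite -(cardD1in x1B) (cardsD1 x) !inE xx1 xB. Qed.

Lemma transfer_fw : I (yj |: (B :\ x)) -> I (yj |: ((y1 |: (B :\ x1)) :\ x)).
Proof.
move=> Ij.
have IE : I E.
  apply: msub Ij; apply/subsetP => z; rewrite !inE.
  by case/orP => [-> | /and3P [-> _ ->]]; rewrite ?orbT.
have lt : #|E| < #|y1 |: (B :\ x1)|.
  by rewrite cE cardsU1 !inE (negbTE y1B) andbF cardD1in // add1n prednK.
have [e] := maug IE I1 lt; rewrite /E !inE => /andP [ne ein] Ie.
case/orP: ein => [/eqP ey1 | /andP [ex1 eB]].
- move: Ie; rewrite ey1; congr (I _); apply/setP => z; rewrite !inE.
  case: (eqVneq z x) => [-> | zx] /=.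
  + have -> : (x == y1) = false by apply/negbTE; apply/eqP => e'; move: xB; rewrite e' (negbTE y1B).
    by [].
  + by case: (z == y1); case: (z == yj); rewrite ?orbT.
- have ex : e = x.
    by apply/eqP; move: ne; rewrite ex1 eB /= !andbT negb_or => /andP [_]; rewrite negbK.
  exfalso; move/negP: N1; apply; move: Ie; rewrite ex; congr (I _).
  apply/setP => z; rewrite !inE.
  case: (eqVneq z x) => [-> | zx] /=; first by rewrite xx1 xB orbT.
  by [].
Qed.

Lemma transfer_bw : I (yj |: ((y1 |: (B :\ x1)) :\ x)) -> I (yj |: (B :\ x)).
Proof.
move=> Ij.
have IE : I E.
  apply: msub Ij; apply/subsetP => z; rewrite !inE.
  by case/orP => [-> | /and3P [-> -> ->]]; rewrite ?orbT.
have lt : #|E| < #|B| by rewrite cE prednK //; move: cB0; case: #|B|.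
have [e] := maug IE IB lt; rewrite /E !inE => /andP [ne eB] Ie.
move: ne; rewrite eB !andbT negb_or => /andP [_]; rewrite negb_and !negbK.
case/orP => [/eqP ex | /eqP ex1].
- exfalso; move/negP: N1; apply; move: Ie; rewrite ex; congr (I _).
  apply/setP => z; rewrite !inE.
  case: (eqVneq z x) => [-> | zx] /=; first by rewrite xx1 xB orbT.
  by [].
- move: Ie; rewrite ex1; congr (I _); apply/setP => z; rewrite !inE.
  case: (eqVneq z x1) => [-> | zx1] /=; first by rewrite (eq_sym x1 x) xx1 x1B orbT.
  by [].
Qed.

End Transfer.


Lemma UM (K : finType) (x y : K -> T) (lt : rel K)
  (Hmin : forall J : {set K}, J != set0 -> exists2 a, a \in J & forall j, j \in J -> ~~ lt j a) :
  forall n (J : {set K}) (B : {set T}), #|J| = n -> I B ->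
  {in J, forall j, x j \in B} -> {in J, forall j, y j \notin B} ->
  {in J &, injective x} -> {in J &, injective y} ->
  {in J, forall j, I (y j |: (B :\ x j))} ->
  (forall i j, i \in J -> j \in J -> i != j -> I (y j |: (B :\ x i)) -> lt j i) ->
  I ((B :\: x @: J) :|: y @: J).
Proof.
elim => [|n IH] J B cJ IB xB yB ix iy pr ch.
  move/eqP: cJ; rewrite cards_eq0 => /eqP ->.
  by rewrite !imset0 setD0 setU0.
have J0 : J != set0 by rewrite -card_gt0 cJ.
have [a aJ amin] := Hmin J J0.
set J' := J :\ a.
set B' := y a |: (B :\ x a).
have sJ : {subset J' <= J} by move=> j; rewrite !inE => /andP [_].
have neq : forall j, j \in J' -> j != a by move=> j; rewrite !inE => /andP [->].
have NI : forall j, j \in J' -> ~~ I (y j |: (B :\ x a)).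
  move=> j jJ; apply/negP => Ij.
  by move/negP: (amin j (sJ _ jJ)); apply; apply: ch => //; [exact: sJ | rewrite eq_sym neq].
have xne : forall j, j \in J' -> x j != x a.
  by move=> j jJ; apply/negP => /eqP /ix e; move: (neq _ jJ); rewrite e ?eqxx // sJ.
have yne : forall j, j \in J' -> y a != y j.
  by move=> j jJ; apply/negP => /eqP /iy e; move: (neq _ jJ); rewrite e ?eqxx // sJ.
have IH' := IH J' B'.
have -> : (B :\: x @: J) :|: y @: J = (B' :\: x @: J') :|: y @: J'.
  have eJ : J = a |: J' by rewrite /J' setD1K.
  rewrite [in LHS]eJ !imsetU1.
  have yX : y a \notin x @: J'.
    by apply/negP => /imsetP [j jJ e]; move: (yB _ aJ); rewrite e xB // sJ.
  apply/setP => z; rewrite !inE.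
  case: (eqVneq z (y a)) => [-> | zy] /=; first by rewrite yX (negbTE (yB _ aJ)) /= !orbT.
  by rewrite negb_or; case: (z \in x @: J'); case: (z == x a).
apply: IH' => //.
- by rewrite /J' (cardsD1 a J) aJ add1n in cJ; case: cJ.
- exact: pr.
- move=> j jJ; rewrite !inE xne // xB ?sJ //.
  by rewrite orbT.
- by move=> j jJ; rewrite !inE negb_or eq_sym yne //= negb_and (yB _ (sJ _ jJ)) orbT.
- by move=> i j iJ jJ e; exact: ix (sJ _ iJ) (sJ _ jJ) e.
- by move=> i j iJ jJ e; exact: iy (sJ _ iJ) (sJ _ jJ) e.
- move=> j jJ; have jJ0 := sJ _ jJ.
  apply: (@transfer_fw B (x a) (x j) (y a) (y j)).
  all: first [ by apply: xB | by apply: yB | by apply: pr | by apply: NI | by apply: xne | by apply: yne | done | idtac ].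
- move=> i j iJ jJ ij Ij; have iJ0 := sJ _ iJ; have jJ0 := sJ _ jJ.
  apply: ch => //.
  apply: (@transfer_bw B (x a) (x i) (y a) (y j)).
  all: first [ by apply: xB | by apply: yB | by apply: pr | by apply: NI | by apply: xne | by apply: yne | done | idtac ].
Qed.


Local Open Scope ring_scope.

Lemma ex_argmax (R : realFieldType) (K : finType) (P : pred K) (F : K -> R) i0 :
  P i0 -> exists2 i, P i & forall j, P j -> F j <= F i.
Proof.
move=> Pi0; case: (@arg_maxP _ _ K i0 P F Pi0) => i Pi H.
by exists i => // j Pj; apply: H.
Qed.

Lemma SM (R : realFieldType) (u s : T -> R) :
  forall k (B B' : {set T}), #|B :\: B'|%N = k -> maxset I B -> maxset I B' ->
  (forall x y, x \in B -> y \notin B -> I (y |: (B :\ x)) -> u y + s x <= u x) ->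
  \sum_(z in B') u z + \sum_(z in B :\: B') s z <= \sum_(z in B) u z.
Proof.
elim => [|k IH] B B' ck HB HB' Hex.
  move/eqP: ck; rewrite cards_eq0 => /eqP e0.
  have sBB : B \subset B' by rewrite -setD_eq0 e0.
  have eBB : B = B'.
    by apply/eqP; rewrite eqEcard sBB /= (basis_card HB HB').
  by rewrite -eBB setDv big_set0 addr0.
have ne : (B :\: B') != set0 by rewrite -card_gt0 ck.
have [x0 x0in] := set0Pn _ ne.
have [x xin xmax] := @ex_argmax R _ (fun z => z \in B :\: B') (fun z => u z - s z) x0 x0in.
have [y' y'in Iy'] := exch HB HB' xin.
have [x' x'in Ix'] := exch HB' HB y'in.
move: (xin) (y'in) (x'in); rewrite !inE => /andP [xB' xB] /andP [y'B y'B'] /andP [x'B' x'B].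
have h1 : u y' + s x' <= u x' by apply: Hex.
have h2 := xmax _ x'in.
have h3 : u y' + s x <= u x.
  by move: h1 h2; lra.
set B'' := x |: (B' :\ y').
have xny : x != y' by apply/eqP => e; move: xB; rewrite e (negbTE y'B).
have cB'' : #|B''| = #|B'|.
  rewrite /B'' cardsU1 !inE (negbTE xB') andbF add1n cardD1in //.
  by rewrite prednK // card_gt0; apply/set0Pn; exists y'.
have HB'' : maxset I B''.
  by apply: (card_basis HB') => //; case/maxsetP: HB'.
have eD : B :\: B'' = (B :\: B') :\ x.
  apply/setP => z; rewrite !inE.
  case: (eqVneq z x) => //= zx.
  case: (eqVneq z y') => [-> | zy] /=; first by rewrite (negbTE y'B) !andbF.
  by [].
have ck' : #|B :\: B''|%N = k.
  by rewrite eD; move: ck; rewrite (cardsD1 x (B :\: B')) xin add1n => -[].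
have H := IH B B'' ck' HB HB'' Hex.
rewrite eD in H; apply: le_trans H.
rewrite (big_setD1 x xin) /= /B'' big_setU1 /=; last by rewrite !inE (negbTE xB') andbF.
rewrite (big_setD1 y' y'B') /=.
by move: h3; lra.
Qed.

End Mat.


Section Split.
Variable T : eqType.
Lemma split_nonuniq (s : seq T) : ~~ uniq s ->
  exists s1 a s2 s3, s = s1 ++ a :: s2 ++ a :: s3.
Proof.
elim: s => [|b t IH] //=; rewrite negb_and negbK.
case/orP => [bt | /IH [s1 [a [s2 [s3 ->]]]]].
- exists [::], b, (take (index b t) t), (drop (index b t).+1 t) => /=.
  by congr (_ :: _); rewrite -{1}(cat_take_drop (index b t) t) (drop_nth b) ?index_mem // nth_index.
- by exists (b :: s1), a, s2, s3.
Qed.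
End Split.

Fixpoint seqs_upto (T : finType) (n : nat) : seq (seq T) :=
  if n is n'.+1 then [::] :: [seq t :: s | t <- enum T, s <- seqs_upto T n'] else [:: [::]].

Lemma mem_seqs_upto (T : finType) n (s : seq T) : size s <= n -> s \in seqs_upto T n.
Proof.
elim: n s => [|n IH] [|a s] //= H.
rewrite inE /=; apply/allpairsP; exists (a, s) => /=; split => //.
- by rewrite mem_enum.
- by apply: IH.
Qed.

Local Open Scope ring_scope.

Lemma list_min (R : realFieldType) (A : eqType) (L : seq A) (P : pred A) (f : A -> R) :
  (exists2 a, a \in L & P a) -> exists2 a0, P a0 & forall a, a \in L -> P a -> f a0 <= f a.
Proof.
elim: L => [[a] //|b L IH] [a].
rewrite inE => /orP [/eqP -> | aL] Pa.
- case: (boolP (has P L)) => [/hasP [c cL Pc] | nh].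
  + have [a0 Pa0 H] := IH (ex_intro2 _ _ c cL Pc).
    case: (leP (f b) (f a0)) => h.
    * exists b => // a'; rewrite inE => /orP [/eqP -> // | a'L Pa'].
      exact: le_trans h (H _ a'L Pa').
    * exists a0 => // a'; rewrite inE => /orP [/eqP -> _ | a'L Pa'].
      - exact: ltW.
      - exact: H.
  + exists b => // a'; rewrite inE => /orP [/eqP -> // | a'L Pa'].
    by move/hasPn: nh => /(_ _ a'L); rewrite Pa'.
- have [a0 Pa0 H] := IH (ex_intro2 _ _ a aL Pa).
  case: (boolP (P b)) => Pb.
  + case: (leP (f b) (f a0)) => h.
    * exists b => // a'; rewrite inE => /orP [/eqP -> // | a'L Pa'].
      exact: le_trans h (H _ a'L Pa').
    * exists a0 => // a'; rewrite inE => /orP [/eqP -> _ | a'L Pa'].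
      - exact: ltW.
      - exact: H.
  + exists a0 => // a'; rewrite inE => /orP [/eqP -> | a'L Pa']; first by rewrite (negbTE Pb).
    exact: H.
Qed.

Section Walks.
Variables (R : realFieldType) (T : finType) (e : rel T) (lam : T -> R) (delta : R).
Hypothesis Hd : 0 <= delta.
Hypothesis Hcl : forall u c, path e u c -> c != [::] -> last u c = u -> delta <= \sum_(v <- c) lam v.

Definition wl (x : T) (c : seq T) : R := \sum_(v <- x :: c) lam v - lam (last x c).

Lemma wl_rcons x c z : wl x (rcons c z) = wl x c + lam (last x c).
Proof.
rewrite /wl last_rcons -cats1 -cat_cons big_cat big_seq1 /=.
by rewrite addrK subrK.
Qed.

Lemma wl_closed x c : last x c = x -> wl x c = \sum_(v <- c) lam v.
Proof. by move=> h; rewrite /wl h big_cons; lra. Qed.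

Lemma shorten n x c : (size c <= n)%N -> path e x c ->
  exists c', [/\ path e x c', last x c' = last x c, (size c' <= #|T|)%N,
     (c != [::] -> c' != [::]) & wl x c' <= wl x c].
Proof.
elim: n x c => [|n IH] x c hm pc.
  by exists c; split => //; move: hm; case: (c).
case: (leqP (size c) #|T|) => hs; first by exists c; split.
have nu : ~~ uniq c.
  apply/negP => /card_uniqP e1; move: hs; rewrite -e1 ltnNge.
  by rewrite max_card.
have [s1 [a [s2 [s3 E]]]] := split_nonuniq nu.
have pc' : path e x (s1 ++ a :: s3).
  move: pc; rewrite E !cat_path /= !cat_path /=.
  by case/and5P => -> -> _ _ ->.
have cl : path e a (rcons s2 a).
  move: pc; rewrite E !cat_path /= !cat_path /= rcons_path.
  by case/and5P => _ _ -> -> _.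
have hcl : delta <= \sum_(v <- rcons s2 a) lam v.
  by apply: Hcl cl _ _; [case: (s2) | rewrite last_rcons].
have lc : last x (s1 ++ a :: s3) = last x c.
  by rewrite E !last_cat /= last_cat.
have sz : (size (s1 ++ a :: s3) <= n)%N.
  move: hm; rewrite E !size_cat /= size_cat /=; lia.
have [c'' [p'' l'' s'' ne'' w'']] := IH x _ sz pc'.
exists c''; split => //; first by rewrite l''.
  by move=> _; apply: ne''; case: (s1).
apply: (le_trans w'').
rewrite /wl lc E.
rewrite !big_cons !big_cat /= !big_cons big_cat /= big_cons.
rewrite -cats1 big_cat big_seq1 /= in hcl.
by move: hcl Hd; lra.
Qed.

Let L := seqs_upto T #|T|.

Lemma min_walk x z : (exists c, [&& path e x c, c != [::] & last x c == z]) ->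
  exists c0, [&& path e x c0, c0 != [::] & last x c0 == z] /\
    forall c, path e x c -> c != [::] -> last x c = z -> wl x c0 <= wl x c.
Proof.
move=> [c /and3P [pc nc /eqP lc]].
have [c' [p' l' s' n' _]] := shorten (leqnn _) pc.
have [|c0 P0 H0] := @list_min R _ L (fun c => [&& path e x c, c != [::] & last x c == z]) (wl x).
  exists c'; first exact: mem_seqs_upto.
  by rewrite p' n' //= l' lc eqxx.
exists c0; split => // d pd nd ld.
have [d' [pd' ld' sd' nd' wd']] := shorten (leqnn _) pd.
apply: (le_trans _ wd'); apply: H0; first exact: mem_seqs_upto.
by rewrite pd' nd' //= ld' ld eqxx.
Qed.

Lemma min_G z : exists p0 : T * seq T,
  (path e p0.1 p0.2 && (last p0.1 p0.2 == z)) /\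
    forall u c, path e u c -> last u c = z -> wl p0.1 p0.2 <= wl u c.
Proof.
pose L2 := [seq (u, c) | u <- enum T, c <- L].
have memL2 : forall u c, (size c <= #|T|)%N -> (u, c) \in L2.
  by move=> u c sc; apply/allpairsP; exists (u, c); rewrite mem_enum mem_seqs_upto.
have [|p0 P0 H0] := @list_min R _ L2 (fun p => path e p.1 p.2 && (last p.1 p.2 == z)) (fun p => wl p.1 p.2).
  by exists (z, [::]); [apply: memL2 | rewrite /= eqxx].
exists p0; split => // u d pd ld.
have [d' [pd' ld' sd' nd' wd']] := shorten (leqnn _) pd.
apply: (le_trans _ wd'); apply: (H0 (u, d')); first exact: memL2.
by rewrite /= pd' ld' ld eqxx.
Qed.

Lemma walks_to_d : exists d : T -> T -> R,
  [/\ forall x y, e x y -> d x y <= lam x,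
      forall x y z, e y z -> d x z <= d x y + lam y &
      forall x, delta <= d x x].
Proof.
have [g Hg] := fin_all_exists min_G.
pose K := delta + \sum_(z : T) `|wl (g z).1 (g z).2|.
have HK : forall x, delta <= K + wl (g x).1 (g x).2.
  move=> x; rewrite /K (bigD1 x) //=.
  have : 0 <= \sum_(i | i != x) `|wl (g i).1 (g i).2| by apply: sumr_ge0.
  have := ler_norm (- wl (g x).1 (g x).2); rewrite normrN; lra.
pose P x z (r : R) := [/\ forall c, path e x c -> c != [::] -> last x c = z -> r <= wl x c,
   r <= K + wl (g z).1 (g z).2 &
   (exists c, [/\ path e x c, c != [::], last x c = z & r = wl x c]) \/ r = K + wl (g z).1 (g z).2].
have Ex : forall x z, exists r, P x z r.
  move=> x z.
  case: (classic (exists c, [&& path e x c, c != [::] & last x c == z])) => h.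
  - have [c0 [/and3P [p0 n0 /eqP l0] H0]] := min_walk h.
    case: (leP (wl x c0) (K + wl (g z).1 (g z).2)) => hl.
    + exists (wl x c0); split => //; left; by exists c0.
    + exists (K + wl (g z).1 (g z).2); split => //; last by right.
      by move=> c pc nc lc; apply: le_trans (ltW hl) (H0 c pc nc lc).
  - exists (K + wl (g z).1 (g z).2); split => //; last by right.
    by move=> c pc nc lc; exfalso; apply: h; exists c; rewrite pc nc lc eqxx.
have [d Hd'] : exists d : T -> T -> R, forall x z, P x z (d x z).
  have [f Hf] := fin_all_exists (fun x => fin_all_exists (Ex x)).
  by exists f.
exists d; split.
- move=> x y xy; case: (Hd' x y) => H _ _.
  have := H [:: y]; rewrite /= xy /= => /(_ isT isT erefl).
  by rewrite /wl /= !big_cons big_nil; lra.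
- move=> x y z yz; case: (Hd' x y) => _ _ [[c [pc nc lc ->]] | ->].
  + case: (Hd' x z) => H _ _; apply: le_trans (H (rcons c z) _ _ _) _.
    * by rewrite rcons_path pc lc.
    * by case: (c).
    * by rewrite last_rcons.
    * by rewrite wl_rcons lc.
  + case: (Hd' x z) => _ H _; apply: (le_trans H).
    case: (Hg y) => /andP [p1 /eqP l1] _.
    case: (Hg z) => _ /(_ (g y).1 (rcons (g y).2 z)).
    rewrite rcons_path p1 l1 yz last_rcons wl_rcons l1 => /(_ isT erefl).
    lra.
- move=> x; case: (Hd' x x) => _ _ [[c [pc nc lc ->]] | ->].
  + by rewrite (wl_closed lc); exact: Hcl pc nc lc.
  + exact: HK.
Qed.

End Walks.

Local Open Scope ring_scope.

Section Main.
Variables (R : realFieldType) (T : finType) (I1 I2 : pred {set T}) (B : {set T}) (delta : R) (w : T -> R).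
Hypotheses (HM1 : is_matroid I1) (HM2 : is_matroid I2) (HB : common_basis I1 I2 B)
  (Hd : 0 <= delta).

Definition lam (a : T) : R := if a \in B then w a else - w a.

Lemma arc_len_tail a b : is_arc I1 I2 B a b -> arc_len I1 I2 B w a b = lam a.
Proof.
rewrite /is_arc /arc_len /lam.
case: (boolP (arcA1 I1 B a b)) => [/and3P [-> _ _] | _] //=.
by move=> h; rewrite h; case/and3P: h => _ /negbTE ->.
Qed.

Lemma HB1 : maxset I1 B. Proof. by case/andP: HB. Qed.
Lemma HB2 : maxset I2 B. Proof. by case/andP: HB. Qed.

Lemma d_to_opt (d : T -> T -> R) :
  (forall x y, is_arc I1 I2 B x y -> d x y <= arc_len I1 I2 B w x y) ->
  (forall x y z, is_arc I1 I2 B y z -> d x z <= d x y + arc_len I1 I2 B w y z) ->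
  (forall x, delta <= d x x) ->
  delta_optimal I1 I2 B delta w.
Proof.
move=> D1 D2 D3 B' /andP [H1' H2'] neB.
have [x0 x0in] : exists x0, x0 \in B :\: B'.
  apply/set0Pn; apply/negP => /eqP e0.
  have sBB : B \subset B' by rewrite -setD_eq0 e0.
  move/negP: neB; apply; rewrite eq_sym eqEcard sBB /=.
  by rewrite (basis_card HM1 HB1 H1').
move: (x0in); rewrite inE => /andP [x0B' x0B].
pose q v := if v == x0 then 0 else d x0 v.
pose w1 v := if v \in B then w v + q v else q v.
pose w2 v := w v - w1 v.
pose s v : R := if v == x0 then delta else 0.
have A1 := @SM _ _ HM1 R w1 (fun _ => 0) _ B B' erefl HB1 H1'.
have A2 := @SM _ _ HM2 R w2 s _ B B' erefl HB2 H2'.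
have E1 : \sum_(z in B') w1 z <= \sum_(z in B) w1 z.
  have H0 : \sum_(z in B :\: B') (0:R) = 0 by rewrite big1.
  have := A1; rewrite H0 addr0; apply.
  move=> x y xB yB Ixy; rewrite addr0 /w1 xB (negbTE yB) /q.
  have yx0 : (y == x0) = false by apply/negbTE; apply/eqP => e; move: yB; rewrite e x0B.
  have arc : is_arc I1 I2 B x y by rewrite /is_arc /arcA1 xB yB Ixy.
  rewrite yx0; case: (eqVneq x x0) => [e | ne].
  - by rewrite addr0 -e (le_trans (D1 _ _ arc)) // arc_len_tail // /lam xB.
  - by rewrite addrC (le_trans (D2 x0 _ _ arc)) // arc_len_tail // /lam xB.
have E2 : \sum_(z in B') w2 z + delta <= \sum_(z in B) w2 z.
  have -> : delta = \sum_(z in B :\: B') s z.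
    rewrite (big_setD1 x0 x0in) /= big1 ?addr0 /s ?eqxx //.
    by move=> i; rewrite !inE => /andP [/negbTE -> _].
  apply: A2 => x y xB yB Ixy.
  have arc : is_arc I1 I2 B y x by rewrite /is_arc /arcA2 xB yB Ixy orbT.
  have yx0 : (y == x0) = false by apply/negbTE; apply/eqP => e; move: yB; rewrite e x0B.
  rewrite /w2 /w1 xB (negbTE yB) /s /q yx0.
  have := D2 x0 _ _ arc; rewrite arc_len_tail // /lam (negbTE yB).
  case: (eqVneq x x0) => [e | ne].
  - by rewrite e; move: (D3 x0); lra.
  - by lra.
have ew : forall S : {set T}, \sum_(z in S) w z = \sum_(z in S) w1 z + \sum_(z in S) w2 z.
  move=> S; rewrite (eq_bigr (fun z => w1 z + w2 z)); first by rewrite big_split.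
  by move=> z _; rewrite /w2 addrC subrK.
rewrite /wset !ew.
by move: E1 E2; lra.
Qed.

End Main.


Local Open Scope ring_scope.

Lemma sum_split_nat (R : realFieldType) (f : nat -> R) a b :
  \sum_(0 <= t < a + b) f t = \sum_(0 <= t < a) f t + \sum_(0 <= t < b) f (a + t).
Proof.
elim: b => [|b IH]; first by rewrite addn0 [in X in _ + X]big_geq // addr0.
by rewrite addnS !big_nat_recr //= ?IH ?addrA // leq_addr.
Qed.

Section Cyc.
Variables (R : realFieldType) (T : finType) (e : rel T) (lam : T -> R) (delta : R).
Hypothesis Hd : 0 <= delta.
Variables (u : T) (c : seq T).
Hypotheses (pc : path e u c) (nc : c != [::]) (lc : last u c = u).
Hypothesis Hsmall : forall u' c', path e u' c' -> c' != [::] -> last u' c' = u' ->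
  (size c' < size c)%N -> delta <= \sum_(v <- c') lam v.

Let n := size c.
Lemma n_gt0 : (0 < n)%N. Proof. by rewrite /n; case: (c) nc. Qed.

Definition v (i : nat) : T := nth u c (i %% n)%N.

Lemma v_mod i : v (i %% n)%N = v i. Proof. by rewrite /v modn_mod. Qed.
Lemma v_addn i : v (i + n) = v i. Proof. by rewrite /v modnDr. Qed.
Lemma v_addn' i : v (n + i) = v i. Proof. by rewrite addnC v_addn. Qed.

Lemma v_arc i : e (v i) (v i.+1).
Proof.
have hn := n_gt0.
move/(pathP u): pc => H.
have -> : v i.+1 = nth u c ((i %% n).+1 %% n)%N by rewrite /v -addn1 -modnDml addn1.
rewrite /v.
have jn : (i %% n < n)%N by rewrite ltn_mod.
move: (i %% n)%N jn => j jn.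
case: (ltnP j.+1 n) => h.
- rewrite (modn_small h).
  by have := H _ h.
- have ej : j.+1 = n by apply/eqP; rewrite eqn_leq h jn.
  rewrite ej modnn.
  have -> : nth u c j = u by rewrite -[RHS]lc -nth_last -/n -ej.
  exact: H 0 hn.
Qed.

Definition L := \sum_(v <- c) lam v.

Lemma L_eq : L = \sum_(0 <= i < n) lam (v i).
Proof.
rewrite /L (big_nth u) /=; apply: eq_big_nat => i /andP [_ hi].
by rewrite /v modn_small.
Qed.

Lemma window q : \sum_(0 <= i < n) lam (v (q + i)) = L.
Proof.
elim: q => [|q IH]; first by rewrite L_eq.
rewrite -IH.
have hn := n_gt0.
have en : n = n.-1.+1 by rewrite prednK.
have e1 : v (q.+1 + n.-1) = v q by rewrite addSnnS -en v_addn.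
rewrite en big_nat_recr //= big_nat_recl //= e1 addrC.
by rewrite addn0; congr (_ + _); apply: eq_bigr => i _; rewrite addSnnS.
Qed.


Lemma Hmin' b m z : (0 < m)%N -> (m < n)%N -> e z (v b.+1) -> v (b + m) = z ->
  delta <= \sum_(0 <= i < m) lam (v (b.+1 + i)).
Proof.
move=> m0 mn ez ebm.
pose s := [seq v (b.+1 + i) | i <- iota 0 m].
have ss : size s = m by rewrite size_map size_iota.
have ns : forall i, (i < m)%N -> nth z s i = v (b.+1 + i).
  by move=> i hi; rewrite (nth_map 0) ?size_iota // nth_iota.
have ps : path e z s.
  apply/(pathP z) => i; rewrite ss => hi.
  case: i hi => [|i] hi /=; first by rewrite ns // addn0.
  by rewrite (ns i (ltnW hi)) (ns i.+1 hi) addnS; apply: v_arc.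
have ls : last z s = z.
  rewrite (last_nth z) ss -(prednK m0) /= ns ?prednK //.
  by rewrite addSnnS prednK.
have ns0 : s != [::] by rewrite -size_eq0 ss -lt0n.
have := Hsmall ps ns0 ls; rewrite ss big_map => /(_ mn).
by rewrite /index_iota subn0.
Qed.


Hypothesis HL : L < delta.

Lemma v_inj i j : (i < n)%N -> (j < n)%N -> v i = v j -> i = j.
Proof.
have key : forall i j, (i < j)%N -> (j < n)%N -> v i = v j -> False.
  move=> {}i {}j ij jn eij.
  have h1 := @Hmin' i (j - i) (v i).
  have h2 := @Hmin' j (n - (j - i)) (v j).
  have e1 : v (i + (j - i)) = v i by rewrite subnKC ?eij // ltnW.
  have e2 : v (j + (n - (j - i))) = v j.
    have -> : (j + (n - (j - i)) = i + n)%N by lia.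
    by rewrite v_addn.
  have := h1 ltac:(lia) ltac:(lia) (v_arc _) e1.
  have := h2 ltac:(lia) ltac:(lia) (v_arc _) e2.
  have hw := window i.+1.
  have en : n = ((j - i) + (n - (j - i)))%N by lia.
  rewrite [in X in \sum_(0 <= _ < X) _]en sum_split_nat in hw.
  have -> : \sum_(0 <= i0 < n - (j - i)) lam (v (j.+1 + i0)) =
            \sum_(0 <= t < n - (j - i)) lam (v (i.+1 + (j - i + t))).
    by apply: eq_bigr => t _; congr (lam (v _)); lia.
  move: hw HL Hd; lra.
move=> hi hj eij.
case: (ltngtP i j) => // h.
- by case: (key _ _ h hj eij).
- by case: (key _ _ h hi (esym eij)).
Qed.

Definition P (a : nat) : R := \sum_(0 <= t < a.+1) lam (v t).

Lemma chord i j : (i < n)%N -> (j < n)%N -> i != j -> e (v i) (v j.+1) ->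
  (P j < P i) || ((P j == P i) && (j < i)%N).
Proof.
move=> hi hj ij eij.
case: (ltngtP i j) => [lt | lt | eq]; last by rewrite eq eqxx in ij.
- have e2 : v (j + (n - j + i)) = v i.
    have -> : (j + (n - j + i) = n + i)%N by lia.
    by rewrite v_addn'.
  have := @Hmin' j (n - j + i) (v i) ltac:(lia) ltac:(lia) eij e2.
  have -> : (n - j + i = (n - j.+1) + i.+1)%N by lia.
  rewrite sum_split_nat.
  have -> : \sum_(0 <= t < i.+1) lam (v (j.+1 + (n - j.+1 + t))) = P i.
    by apply: eq_bigr => t _; rewrite -[v t]v_addn'; congr (lam (v _)); lia.
  have hL : L = P j + \sum_(0 <= t < n - j.+1) lam (v (j.+1 + t)).
    by rewrite L_eq /P -sum_split_nat subnKC.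
  by move=> h; apply/orP; left; move: h hL HL; lra.
- have e2 : v (j + (i - j)) = v i by rewrite subnKC // ltnW.
  have := @Hmin' j (i - j) (v i) ltac:(lia) ltac:(lia) eij e2.
  have hP : P i = P j + \sum_(0 <= t < i - j) lam (v (j.+1 + t)).
    by rewrite /P -sum_split_nat; congr (\sum_(0 <= t < _) _); lia.
  rewrite andbT => h.
  have : P j <= P i by move: hP h Hd; lra.
  by rewrite le_eqVlt orbC.
Qed.

End Cyc.

Local Open Scope ring_scope.

Lemma lexmin (R : realFieldType) (K : finType) (J : {set K}) (k : K -> R) (t : K -> nat) :
  J != set0 -> exists2 a, a \in J &
    forall j, j \in J -> ~~ ((k j < k a) || ((k j == k a) && (t j < t a)%N)).
Proof.
case/set0Pn => a0 a0J.
have [a1 a1J H1] := @ex_argmax R K (fun j => j \in J) (fun j => - k j) a0 a0J.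
have a1M : (a1 \in J) && (k a1 == k a1) by rewrite a1J eqxx.
have [a aM H2] := @ex_argmax R K (fun j => (j \in J) && (k j == k a1)) (fun j => - (t j)%:R) a1 a1M.
case/andP: aM => aJ /eqP ka.
exists a => // j jJ; rewrite negb_or negb_and -leNgt ka.
have := H1 _ jJ; rewrite lerN2 => -> /=.
case: (eqVneq (k j) (k a1)) => //= e1.
have := H2 j; rewrite jJ e1 eqxx => /(_ isT); rewrite lerN2 ler_nat.
by rewrite -leqNgt.
Qed.

Section Core.
Variables (R : realFieldType) (T : finType) (I1 I2 : pred {set T}) (B : {set T}) (delta : R) (w : T -> R).
Hypotheses (HM1 : is_matroid I1) (HM2 : is_matroid I2) (HB : common_basis I1 I2 B)
  (Hd : 0 <= delta).
Let e := is_arc I1 I2 B.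
Let lm := lam B w.
Variables (u : T) (c : seq T).
Hypotheses (pc : path e u c) (nc : c != [::]) (lc : last u c = u).
Hypothesis Hsmall : forall u' c', path e u' c' -> c' != [::] -> last u' c' = u' ->
  (size c' < size c)%N -> delta <= \sum_(v <- c') lm v.
Hypothesis HL : L lm c < delta.

Let n := size c.
Let vv := v u c.
Let hn : (0 < n)%N := n_gt0 nc.

Lemma arc_sides a b : e a b -> ((a \in B) && (b \notin B)) || ((a \notin B) && (b \in B)).
Proof.
rewrite /e /is_arc /arcA1 /arcA2.
by case/orP => [/and3P [-> -> _] | /and3P [-> -> _]]; rewrite ?orbT.
Qed.

Lemma alt i : (vv i.+1 \in B) = ~~ (vv i \in B).
Proof.
have := arc_sides (v_arc pc nc lc i).
by case: (v u c i \in B); case: (v u c i.+1 \in B).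
Qed.

Lemma a1 i : vv i \in B -> I1 (vv i.+1 |: (B :\ vv i)).
Proof.
move=> h; have := v_arc pc nc lc i; rewrite /e /is_arc /arcA1 /arcA2.
case/orP => [/and3P [_ _ ->] // | /and3P [_ hh _]].
by move: hh; rewrite /vv in h; rewrite h.
Qed.

Lemma a2 i : vv i \notin B -> I2 (vv i |: (B :\ vv i.+1)).
Proof.
move=> h; have := v_arc pc nc lc i; rewrite /e /is_arc /arcA1 /arcA2.
case/orP => [/and3P [hh _ _] | /and3P [_ _ ->] //].
by move: hh; rewrite /vv in h; rewrite (negbTE h).
Qed.

Lemma vinj_mod i j : vv i = vv j -> (i %% n)%N = (j %% n)%N.
Proof.
rewrite /vv -(v_mod u c i) -(v_mod u c j) => h.
by apply: (v_inj Hd pc nc lc Hsmall HL) => //; rewrite ltn_mod.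
Qed.


Lemma succ_ix (p : nat) : exists q : 'I_n, vv q = vv p.+1.
Proof.
exists (Ordinal (ltn_pmod p.+1 hn)) => /=.
by rewrite /vv v_mod.
Qed.

Lemma pred_ix (p : nat) : exists q : 'I_n, vv q.+1 = vv p.
Proof.
exists (Ordinal (ltn_pmod (p + n.-1) hn)) => /=.
rewrite /vv -(v_mod u c (_ %% _).+1) -addn1 modnDml v_mod addn1 -addnS prednK //.
by rewrite /n v_addn.
Qed.

Let J1 := [set p : 'I_n | vv p \in B].
Let J2 := [set p : 'I_n | vv p \notin B].
Let X := [set vv (nat_of_ord p) | p in J1].
Let Y := [set vv (nat_of_ord p).+1 | p in J1].

Lemma X2 : X = [set vv (nat_of_ord p).+1 | p in J2].
Proof.
apply/setP => z; apply/imsetP/imsetP => [[p pJ ->] | [q qJ ->]].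
- have [q eq] := pred_ix p; exists q => //.
  by rewrite inE -alt eq; rewrite inE in pJ.
- have [p ep] := succ_ix q; exists p => //.
  by rewrite inE ep alt; rewrite inE in qJ.
Qed.

Lemma Y2 : Y = [set vv (nat_of_ord p) | p in J2].
Proof.
apply/setP => z; apply/imsetP/imsetP => [[p pJ ->] | [q qJ ->]].
- have [q eq] := succ_ix p; exists q => //.
  by rewrite inE eq alt negbK; rewrite inE in pJ.
- have [p ep] := pred_ix q; exists p => //.
  by rewrite inE; apply/negPn; rewrite -alt ep; rewrite inE in qJ.
Qed.

Lemma injv' (J : {set 'I_n}) : {in J &, injective (fun p : 'I_n => vv p)}.
Proof.
move=> p q _ _ h; have := vinj_mod h.
rewrite (modn_small (ltn_ord p)) (modn_small (ltn_ord q)).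
exact: val_inj.
Qed.

Lemma injvS (J : {set 'I_n}) : {in J &, injective (fun p : 'I_n => vv p.+1)}.
Proof.
move=> p q _ _ h; apply: val_inj => /=.
have := vinj_mod h; rewrite -[p.+1]addn1 -[q.+1]addn1 => /eqP; rewrite eqn_modDr.
rewrite (modn_small (ltn_ord p)) (modn_small (ltn_ord q)).
by move/eqP.
Qed.

Lemma IB1 : I1 ((B :\: X) :|: Y).
Proof.
have [_ _ IBb] : [/\ True, True & I1 B] by case/andP: HB => /maxsetP [] //.
apply: (@UM _ _ HM1 _ (fun p : 'I_n => vv p) (fun p => vv p.+1)
  (fun j i => (P lm u c j < P lm u c i) || ((P lm u c j == P lm u c i) && (j < i)%N)) _ #|J1| J1 B erefl IBb).
- move=> J J0; have [a aJ H] := lexmin (fun p : 'I_n => P lm u c p) (fun p : 'I_n => val p) J0.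
  by exists a.
- by move=> j; rewrite inE.
- by move=> j; rewrite inE => h; rewrite alt h.
- exact: injv'.
- exact: injvS.
- by move=> j; rewrite inE => h; apply: a1.
- move=> i j iJ jJ ij Ij.
  rewrite inE in iJ; rewrite inE in jJ.
  apply: (chord Hd pc nc lc Hsmall HL) => //.
  rewrite /e /is_arc /arcA1 iJ /= alt jJ /=.
  by rewrite Ij.
Qed.

Lemma IB2 : I2 ((B :\: X) :|: Y).
Proof.
have [_ _ IBb] : [/\ True, True & I2 B] by case/andP: HB => _ /maxsetP [] //.
rewrite X2 Y2.
apply: (@UM _ _ HM2 _ (fun p : 'I_n => vv p.+1) (fun p => vv p)
  (fun j i => (P lm u c i < P lm u c j) || ((P lm u c i == P lm u c j) && (i < j)%N)) _ #|J2| J2 B erefl IBb).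
- move=> J J0; have [a aJ H] := lexmin (fun p : 'I_n => - P lm u c p) (fun p : 'I_n => (n - val p)%N) J0.
  exists a => // j jJ; apply/negP => h; move/negP: (H j jJ); apply.
  case/orP: h => [h | /andP [/eqP h1 h2]].
  + by rewrite ltrN2 h.
  + by rewrite h1 eqxx /=; apply/orP; right; move: h2; have := ltn_ord j; have := ltn_ord a; lia.
- by move=> j; rewrite inE => h; rewrite alt h.
- by move=> j; rewrite inE.
- exact: injvS.
- exact: injv'.
- by move=> j; rewrite inE => h; apply: a2.
- move=> i j iJ jJ ij Ij.
  rewrite inE in iJ; rewrite inE in jJ.
  apply: (chord Hd pc nc lc Hsmall HL) => //; first by rewrite eq_sym.
  rewrite /e /is_arc /arcA2 alt iJ /= jJ /=.
  by rewrite Ij orbT.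
Qed.


Lemma sXB : X \subset B.
Proof. by apply/subsetP => z /imsetP [p]; rewrite inE => pB ->. Qed.

Lemma YnB z : z \in Y -> z \notin B.
Proof. by case/imsetP => p; rewrite inE => pB ->; rewrite alt pB. Qed.

Lemma core_contra : delta_optimal I1 I2 B delta w -> False.
Proof.
move=> Hopt.
have HB1 : maxset I1 B by case/andP: HB.
have HB2 : maxset I2 B by case/andP: HB.
set B' := (B :\: X) :|: Y.
have cX : #|X| = #|J1| by apply: card_in_imset; apply: injv'.
have cY : #|Y| = #|J1| by apply: card_in_imset; apply: injvS.
have eI : B' :&: B = B :\: X.
  apply/setP => z; rewrite !inE.
  case: (boolP (z \in Y)) => zY; last by rewrite orbF; case: (z \in X); case: (z \in B).
  by rewrite (negbTE (YnB zY)) !andbF.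
have eD : B' :\: B = Y.
  apply/setP => z; rewrite !inE.
  case: (boolP (z \in Y)) => zY; first by rewrite (YnB zY) orbT.
  by rewrite orbF; case: (z \in X); case: (z \in B).
have cB' : #|B'| = #|B|.
  have := cardsID B B'; rewrite eI eD => <-.
  have := cardsID X B; rewrite (setIidPr sXB) => <-.
  by rewrite cX cY addnC.
have HB'1 := card_basis HM1 HB1 (IB1) cB'.
have HB'2 := card_basis HM2 HB2 (IB2) cB'.
have neq : B' != B.
  apply/negP => /eqP eB.
  pose p0 : 'I_n := Ordinal hn.
  case: (boolP (vv p0 \in B)) => h.
  - have : vv p0 \in X by apply/imsetP; exists p0; rewrite ?inE.
    move=> hX; have : vv p0 \in B' by rewrite eB.
    rewrite !inE hX /= => hY; move: (YnB hY); by rewrite h.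
  - have : vv p0 \in Y by rewrite Y2; apply/imsetP; exists p0; rewrite ?inE.
    move=> hY; have : vv p0 \in B' by rewrite !inE hY orbT.
    by rewrite eB (negbTE h).
have := Hopt B' (introT andP (conj HB'1 HB'2)) neq.
have wB' : wset w B' = \sum_(z in B :\: X) w z + \sum_(z in Y) w z.
  by rewrite /wset (big_setID B) /= eI eD.
have wB : wset w B = \sum_(z in X) w z + \sum_(z in B :\: X) w z.
  by rewrite /wset (big_setID X) /= (setIidPr sXB).
have hL : L lm c = \sum_(z in X) w z - \sum_(z in Y) w z.
  rewrite (L_eq lm u c) -/n big_mkord (bigID (fun p : 'I_n => vv p \in B)) /=.
  rewrite /X (big_imset _ (@injv' J1)) /=.
  rewrite Y2 (big_imset _ (@injv' J2)) /=.
  rewrite -sumrN.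
  congr (_ + _); apply: eq_big => p; rewrite ?inE //.
  - by move=> h; rewrite /lm /lam /vv -/vv h.
  - by move=> h; rewrite /lm /lam /vv -/vv (negbTE h).
rewrite wB' wB; move: hL HL; lra.
Qed.

End Core.

Local Open Scope ring_scope.

Lemma opt_cycles (R : realFieldType) (T : finType) (I1 I2 : pred {set T}) (B : {set T}) (delta : R) (w : T -> R) :
  is_matroid I1 -> is_matroid I2 -> common_basis I1 I2 B -> 0 <= delta ->
  delta_optimal I1 I2 B delta w ->
  forall u c, path (is_arc I1 I2 B) u c -> c != [::] -> last u c = u ->
    delta <= \sum_(v <- c) lam B w v.
Proof.
move=> HM1 HM2 HB Hd Hopt.
suff H : forall k u c, (size c <= k)%N -> path (is_arc I1 I2 B) u c -> c != [::] -> last u c = u ->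
    delta <= \sum_(v <- c) lam B w v.
  by move=> u c; apply: H (leqnn _).
elim => [|k IH] u c hk pc nc lc; first by move: hk nc; case: (c).
case: (leP delta (\sum_(v <- c) lam B w v)) => // hlt.
exfalso; apply: (core_contra HM1 HM2 HB Hd pc nc lc _ hlt Hopt).
move=> u' c' pc' nc' lc' sz; apply: IH pc' nc' lc'.
by rewrite -ltnS (leq_trans sz hk).
Qed.

Unset Implicit Arguments.

Theorem mainTheorem4 (R : realFieldType) (T : finType)
  (I1 I2 : pred {set T}) (B : {set T}) (delta : R) (w : T -> R) :
  is_matroid I1 -> is_matroid I2 -> common_basis I1 I2 B ->
  0 <= delta -> (forall x, 0 <= w x) ->
  delta_optimal I1 I2 B delta w <->
  exists d : T -> T -> R,
    [/\ (forall x y, is_arc I1 I2 B x y -> d x y <= arc_len I1 I2 B w x y),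
        (forall x y z, is_arc I1 I2 B y z -> d x z <= d x y + arc_len I1 I2 B w y z) &
        (forall x, delta <= d x x)].
Proof.
move=> HM1 HM2 HB Hd _; split.
- move=> Hopt.
  have Hcl := opt_cycles HM1 HM2 HB Hd Hopt.
  have [d [D1 D2 D3]] := walks_to_d Hd Hcl.
  exists d; split => //.
  + by move=> x y a; rewrite arc_len_tail //; apply: D1.
  + by move=> x y z a; rewrite arc_len_tail //; apply: D2.
- by case=> d [D1 D2 D3]; apply: d_to_opt D1 D2 D3.
Qed.
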